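(* Let $L>0$, $0<\sigma\le1$, $r>0$, and let $f(\mathbf I,\boldsymbol\phi)=\sum_{\boldsymbol\mu\in\mathcal N}f_{\boldsymbol\mu}(\mathbf I)e^{\mathrm i\boldsymbol\mu\cdot\boldsymbol\phi}$ be analytic on $\mathcal D_{L,r,\sigma}$, where $\mathcal N\subset\mathbb Z^n$ is finite. If $r<1/(2n|\mathcal N|)$, then $Qf$ is analytic on $\mathcal D_{L,r,\sigma'}$ for every $0<\sigma'<\sigma$, and $$\|Qf\|_{L,r,\sigma'}\le 2\Big(\frac{4}{\sigma-\sigma'}\Big)^n\frac{\|f\|_{L,r,\sigma}}{L}.$$
   Context: Fix $n\ge2$ and $1\le k\le n$ (here $2\le k\le n$ in the paper). $\mathcal D_{L,r,\sigma}=\{(\mathbf I,\boldsymbol\phi)\in\mathbb C^{2n}:|I_i-L\delta_{i,k}|<rL,\ |\mathrm{Im}\,\phi_i|<\sigma,\ i=1,\dots,n\}$; for functions $2\pi$-periodic in each $\phi_i$, $\|f\|_{L,r,\sigma}=\sup_{\mathcal D_{L,r,\sigma}}|f|$. For $\boldsymbol\mu\in\mathbb Z^n$, $|\boldsymbol\mu|=\max_i|\mu_i|$ and $|\mathcal N|=\sup_{\boldsymbol\mu\in\mathcal N}|\boldsymbol\mu|$. $Qf=-\mathrm i\sum_{\boldsymbol\mu\in\mathcal N,\ \mu_k\neq0}\frac{f_{\boldsymbol\mu}(\mathbf I)}{\mathbf I\cdot\boldsymbol\mu}e^{\mathrm i\boldsymbol\mu\cdot\boldsymbol\phi}$. *)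

(* Defs.v *)
From HB Require Import structures.
From mathcomp Require Import all_boot all_order all_algebra.
From mathcomp Require Import complex.
From mathcomp Require Import all_classical all_reals.
From mathcomp Require Import ereal sequences.
From mathcomp.analysis Require Import exp trigo.
Set Implicit Arguments. Unset Strict Implicit. Unset Printing Implicit Defensive.
Import Order.TTheory GRing.Theory Num.Theory.
Local Open Scope ring_scope.

Section Defs.
Variable R : realType.
Local Notation C := R[i].

Definition cabs (z : C) : R := ComplexField.Normc.normc z.

Definition cexp (z : C) : C :=
  ((expR (complex.Re z) * cos (complex.Im z)) +i* (expR (complex.Re z) * sin (complex.Im z)))%C.

Definition vnorm (n : nat) (v : 'I_n -> C) : R := \big[Num.max/0]_(i < n) cabs (v i).

Definition idot (n : nat) (mu : {ffun 'I_n -> int}) (phi : 'I_n -> C) : C :=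
  \sum_(i < n) (mu i)%:~R * phi i.

Definition inorm (n : nat) (mu : {ffun 'I_n -> int}) : nat := \max_(i < n) `|mu i|%N.

Definition setnorm (n : nat) (N : seq {ffun 'I_n -> int}) : nat :=
  \max_(mu <- N) inorm mu.

Definition domD (n : nat) (k : 'I_n) (L r sigma : R) (I phi : 'I_n -> C) : Prop :=
  forall i : 'I_n,
    cabs (I i - (if i == k then L%:C else 0)%C) < r * L /\
    `|complex.Im (phi i)| < sigma.

(* holomorphic (complex Frechet-differentiable) at every point of U;
   "analytic" in the paper *)
Definition analytic_on (n : nat) (F : ('I_n -> C) -> ('I_n -> C) -> C)
    (U : ('I_n -> C) -> ('I_n -> C) -> Prop) : Prop :=
  forall I phi, U I phi ->
    exists a b : 'I_n -> C,
      forall eps : R, 0 < eps -> exists2 delta : R, 0 < delta &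
        forall h g : 'I_n -> C, vnorm h < delta -> vnorm g < delta ->
          cabs (F (fun i => I i + h i) (fun i => phi i + g i) - F I phi
                 - \sum_(i < n) a i * h i - \sum_(i < n) b i * g i)
            <= eps * Num.max (vnorm h) (vnorm g).

Definition supnorm (n : nat) (k : 'I_n) (L r sigma : R)
    (F : ('I_n -> C) -> ('I_n -> C) -> C) : \bar R :=
  ereal_sup [set x : \bar R | exists I phi, domD k L r sigma I phi /\ x = ((cabs (F I phi))%:E)%E].

(* the operator Q applied to f = sum_{mu in N} fmu mu (I) e^{i mu.phi} *)
Definition Qop (n : nat) (k : 'I_n) (N : seq {ffun 'I_n -> int})
    (fmu : {ffun 'I_n -> int} -> ('I_n -> C) -> C) (I phi : 'I_n -> C) : C :=
  - 'i%C * \sum_(mu <- N | mu k != 0) (fmu mu I / idot mu I * cexp ('i%C * idot mu phi)).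

End Defs.

(* Main.v *)
Set Warnings "-all".
Require Import Defs.
From HB Require Import structures.
From mathcomp Require Import all_boot all_order all_algebra.
From mathcomp Require Import complex.
From mathcomp Require Import all_classical all_reals.
From mathcomp Require Import ereal sequences.
From mathcomp.analysis Require Import exp trigo.
From mathcomp Require Import topology normedtype derive.
Import Order.TTheory GRing.Theory Num.Theory numFieldNormedType.Exports.
Local Open Scope ring_scope.
From mathcomp Require Import ring lra.

Section Real.
Context {R : realType}.

Lemma sin_abs_le (x : R) : `|sin x| <= `|x|.
Proof.
wlog hx : x / 0 <= x.
  move=> H; case: (lerP 0 x) => [/H//|hx].
  by rewrite -normrN -sinN -(normrN x) H // oppr_ge0 ltW.
case: (@MVT_segment R sin cos 0 x hx (fun y _ => is_derive_sin y)) => [|c _ Hc].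
  idtac.
  exact/continuous_subspaceT/continuous_sin.
move: Hc; rewrite sin0 subr0 subr0 => ->.
by rewrite normrM ler_piMl // cos_max.
Qed.

Lemma sqr_le_of_abs (a b : R) : `|a| <= `|b| -> a ^+ 2 <= b ^+ 2.
Proof.
move=> h; rewrite -(real_normK (num_real a)) -(real_normK (num_real b)).
by rewrite !expr2 ler_pM.
Qed.

Lemma cos_sub1 (x : R) : `|cos x - 1| <= x ^+ 2 / 2.
Proof.
have e : cos x = 1 - 2 * sin (x / 2) ^+ 2.
  have hx : x = (x / 2) *+ 2 by rewrite -mulr_natr divfK // pnatr_eq0.
  rewrite {1}hx cos_mulr2n cos2sin2; set s := sin (x / 2); lra.
have hs := @sqr_le_of_abs _ _ (sin_abs_le (x / 2)).
rewrite e; have h0 : 0 <= sin (x / 2) ^+ 2 by apply: sqr_ge0.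
rewrite ler_norml; apply/andP; split; nra.
Qed.

Lemma sin_sub (x : R) : `|x| <= 1 -> `|sin x - x| <= x ^+ 2.
Proof.
wlog hx : x / 0 <= x.
  move=> H; case: (lerP 0 x) => [/H//|hx] h1.
  have h0 : 0 <= - x by rewrite oppr_ge0 ltW.
  have h2 : `|- x| <= 1 by rewrite normrN.
  have := H (- x) h0 h2.
  by rewrite sinN sqrrN -opprD normrN.
move=> h1.
case: (@MVT_segment R (@sin R - id)%R (fun t => cos t - 1) 0 x hx
   (fun y _ => is_deriveB (is_derive_sin y) (is_derive_id y 1))) => [|c].
  apply/continuous_subspaceT => t; apply: continuousB; first exact: continuous_sin.
  exact: cvg_id.
rewrite in_itv /= => /andP[c0 cx] /=; rewrite !fctE sin0 !subr0 => ->.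
have := cos_sub1 c; rewrite normrM (ger0_norm hx) => hc.
have hx1 : x <= 1 by rewrite -(ger0_norm hx).
apply: (le_trans (ler_wpM2r hx hc)).
have : c ^+ 2 <= x ^+ 2 by apply: sqr_le_of_abs; rewrite !ger0_norm //; apply: le_trans cx.
nra.
Qed.

Lemma exp_sub (a : R) : `|a| <= 1 / 2 -> `|expR a - 1 - a| <= 2 * a ^+ 2.
Proof.
rewrite ler_norml => /andP[ha1 ha2].
have E1 := expR_ge1Dx a; have E2 := expR_ge1Dx (- a).
have E3 := expRxMexpNx_1 a; have E0 := expR_gt0 a.
set E := expR a in E1 E3 E0 *; set F := expR (- a) in E2 E3 *.
have hE : E <= 2 by nra.
have key : E - 1 - a <= E * a ^+ 2 by nra.
rewrite ler_norml; apply/andP; split; nra.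
Qed.

End Real.

Section Cplx.
Context {R : realType}.
Local Notation C := R[i].
Local Open Scope complex_scope.
Local Notation cabs := (@cabs R).
Local Notation cexp := (@cexp R).

Lemma cabs_ge0 (z : C) : 0 <= cabs z.
Proof. by case: z => a b; rewrite /cabs /= sqrtr_ge0. Qed.

Lemma cabsD (x y : C) : cabs (x + y) <= cabs x + cabs y.
Proof. exact: (@le_normcD R x y). Qed.

Lemma cabsM (x y : C) : cabs (x * y) = cabs x * cabs y.
Proof. exact: ComplexField.Normc.normcM. Qed.

Lemma cabsN (x : C) : cabs (- x) = cabs x.
Proof. exact: (@normcN R x). Qed.

Lemma cabsB (x y : C) : cabs (x - y) <= cabs x + cabs y.
Proof. by rewrite -(cabsN y) cabsD. Qed.

Lemma cabsV (x : C) : cabs x^-1 = (cabs x)^-1.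
Proof. exact: ComplexField.Normc.normcV. Qed.

Lemma cabs0 : cabs 0 = 0.
Proof. exact: ComplexField.Normc.normc0. Qed.

Lemma cabs_eq0 (x : C) : cabs x = 0 -> x = 0.
Proof. exact: ComplexField.Normc.eq0_normc. Qed.

Lemma cabs_real (r : R) : cabs r%:C = `|r|.
Proof. by rewrite /cabs /= expr0n /= addr0 sqrtr_sqr. Qed.

Lemma cabs_Re (z : C) : `|complex.Re z| <= cabs z.
Proof.
case: z => a b; rewrite /cabs /= -sqrtr_sqr; apply: ler_wsqrtr.
by rewrite lerDl sqr_ge0.
Qed.

Lemma cabs_Im (z : C) : `|complex.Im z| <= cabs z.
Proof.
case: z => a b; rewrite /cabs /= -sqrtr_sqr; apply: ler_wsqrtr.
by rewrite lerDr sqr_ge0.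
Qed.

Lemma cabs_i : cabs 'i%C = 1.
Proof. by rewrite /cabs /= expr0n /= expr1n add0r sqrtr1. Qed.

Lemma complex_split (a b : R) : (a +i* b)%C = a%:C + 'i%C * b%:C.
Proof. by apply/eqP; rewrite eq_complex /= !mul0r !mul1r ?mulr0 ?subrr !addr0 ?subr0 ?add0r !eqxx. Qed.

Lemma cabs_le_ReIm (a b : R) : cabs (a +i* b)%C <= `|a| + `|b|.
Proof.
rewrite complex_split; apply: le_trans (cabsD _ _) _.
by rewrite cabsM cabs_i mul1r !cabs_real.
Qed.

Lemma cabs_sum (I : Type) (r : seq I) (P : pred I) (F : I -> C) :
  cabs (\sum_(i <- r | P i) F i) <= \sum_(i <- r | P i) cabs (F i).
Proof.
elim: r => [|x r IH]; first by rewrite !big_nil cabs0.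
rewrite !big_cons; case: (P x) => //.
by apply: le_trans (cabsD _ _) _; rewrite lerD2l.
Qed.

Lemma cabs_int (d : int) : cabs (d%:~R : C) = `|(d%:~R : R)|.
Proof. by rewrite -cabs_real -(rmorph_int (real_complex R)). Qed.

Lemma int_complex (d : int) : (d%:~R : C) = (d%:~R : R)%:C.
Proof. by rewrite -(rmorph_int (real_complex R)). Qed.

Lemma cexpD (x y : C) : cexp (x + y) = cexp x * cexp y.
Proof.
case: x => a b; case: y => c d; rewrite /cexp /=.
apply/eqP; rewrite eq_complex /= expRD cosD sinD; apply/andP; split; apply/eqP; ring.
Qed.

Lemma cexp0 : cexp 0 = 1.
Proof. by rewrite /cexp /= expR0 cos0 sin0 mul1r mulr0. Qed.

Lemma cabs_cexp (z : C) : cabs (cexp z) = expR (complex.Re z).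
Proof.
rewrite /cexp /cabs /= !exprMn -mulrDr cos2Dsin2 mulr1 sqrtr_sqr.
by rewrite ger0_norm // expR_ge0.
Qed.

Lemma cexp_sum (I : Type) (r : seq I) (P : pred I) (F : I -> C) :
  cexp (\sum_(i <- r | P i) F i) = \prod_(i <- r | P i) cexp (F i).
Proof. exact: (big_morph cexp cexpD cexp0). Qed.

Lemma cexpMn (z : C) (m : nat) : cexp (z *+ m) = cexp z ^+ m.
Proof.
elim: m => [|m IH]; first by rewrite mulr0n expr0 cexp0.
by rewrite mulrS exprS cexpD IH.
Qed.

Lemma cexpN (z : C) : cexp (- z) = (cexp z)^-1.
Proof.
have h : cexp z * cexp (- z) = 1 by rewrite -cexpD subrr cexp0.
have hz : cexp z != 0.
  apply/negP => /eqP e; move: h; rewrite e mul0r => /eqP; rewrite eq_sym oner_eq0.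
  done.
by apply: (mulfI hz); rewrite h mulfV.
Qed.

End Cplx.

Section Quad.
Context {R : realType}.
Local Open Scope complex_scope.

Lemma quad_arith (A B X Y S Co Rr c : R) : 0 <= A -> 0 <= B -> 0 <= X -> 0 <= S ->
  0 <= Rr -> 0 <= Co -> A <= c -> B <= c -> c <= 1 / 2 -> X <= B ^+ 2 / 2 ->
  Y <= B ^+ 2 -> S <= B -> Co <= 1 -> Rr <= 2 * A ^+ 2 ->
  X + A * X + Rr * Co + (Y + A * S + Rr * S) <= 10 * c ^+ 2.
Proof.
move=> A0 B0 X0 S0 R0 C0 hA hB hc hX hY hS hC hR.
have c0 : 0 <= c by apply: le_trans hA.
have hB2 : B ^+ 2 <= c ^+ 2 by nra.
have hA2 : A ^+ 2 <= c ^+ 2 by nra.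
have h1 : A * X <= c * (c ^+ 2 / 2) by apply: ler_pM => //; nra.
have h2 : Rr * Co <= (2 * c ^+ 2) * 1 by apply: ler_pM => //; nra.
have h3 : A * S <= c * c by apply: ler_pM => //; nra.
have h4 : Rr * S <= (2 * c ^+ 2) * c by apply: ler_pM => //; nra.
have h5 : c * c ^+ 2 <= c ^+ 2 / 2 by nra.
nra.
Qed.

Lemma quad_bound (a b c : R) : `|a| <= c -> `|b| <= c -> c <= 1 / 2 ->
  `|expR a * cos b - 1 - a| + `|expR a * sin b - b| <= 10 * c ^+ 2.
Proof.
move=> ha hb hc.
have c0 : 0 <= c by apply: le_trans ha.
have hc1 := cos_sub1 b.
have hb1 : `|b| <= 1 by apply: (le_trans hb); apply: (le_trans hc); lra.
have hs1 := sin_sub b hb1.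
have hs := sin_abs_le b.
have ha2 : `|a| <= 1 / 2 by apply: le_trans hc.
have he := exp_sub a ha2.
have hcos := cos_max b.
set r1 := expR a - 1 - a in he.
have eX : expR a * cos b - 1 - a = (cos b - 1) + a * (cos b - 1) + r1 * cos b.
  by rewrite /r1; ring.
have eY : expR a * sin b - b = (sin b - b) + a * sin b + r1 * sin b.
  by rewrite /r1; ring.
rewrite eX eY.
have nX : `|(cos b - 1) + a * (cos b - 1) + r1 * cos b| <=
   `|cos b - 1| + `|a| * `|cos b - 1| + `|r1| * `|cos b|.
  by rewrite -!normrM; apply: (le_trans (ler_normD _ _)); rewrite lerD2r ler_normD.
have nY : `|(sin b - b) + a * sin b + r1 * sin b| <=
   `|sin b - b| + `|a| * `|sin b| + `|r1| * `|sin b|.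
  by rewrite -!normrM; apply: (le_trans (ler_normD _ _)); rewrite lerD2r ler_normD.
apply: (le_trans (lerD nX nY)).
have eb : b ^+ 2 = `|b| ^+ 2 by rewrite real_normK // num_real.
have ea : a ^+ 2 = `|a| ^+ 2 by rewrite real_normK // num_real.
rewrite eb in hc1 hs1; rewrite ea in he.
apply: (@quad_arith `|a| `|b|) => //; exact: normr_ge0.
Qed.

Lemma cexp_quad (w : R[i]) : cabs w <= 1 / 2 -> cabs (cexp w - 1 - w) <= 10 * cabs w ^+ 2.
Proof.
case: w => a b hw.
have -> : cexp (a +i* b) - 1 - (a +i* b) =
    ((expR a * cos b - 1 - a) +i* (expR a * sin b - b)).
  by apply/eqP; rewrite eq_complex /= subr0 !eqxx.
apply: (le_trans (cabs_le_ReIm _ _)); apply: quad_bound => //.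
  exact: (cabs_Re (a +i* b)).
exact: (cabs_Im (a +i* b)).
Qed.

End Quad.

Section VN.
Context {R : realType} {n : nat}.
Local Notation C := R[i].
Local Notation V := ('I_n -> C).
Local Open Scope complex_scope.

Lemma vnorm_ge0 (v : V) : 0 <= vnorm v.
Proof.
rewrite /vnorm; apply: (big_ind (fun x => 0 <= x)) => //.
  by move=> x y hx hy; rewrite le_max hx.
by move=> i _; apply: cabs_ge0.
Qed.

Lemma vnorm_ge (v : V) i : cabs (v i) <= vnorm v.
Proof. by rewrite /vnorm (bigD1 i) //= le_max lexx. Qed.

Lemma vnorm_lt (v : V) d : 0 < d -> (forall i, cabs (v i) < d) -> vnorm v < d.
Proof.
move=> d0 h; rewrite /vnorm; apply: (big_ind (fun x => x < d)) => [//|x y hx hy|i _]; [by rewrite gt_max hx hy|exact: h].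
Qed.

Lemma vnorm_le (v : V) d : 0 <= d -> (forall i, cabs (v i) <= d) -> vnorm v <= d.
Proof.
move=> d0 h; rewrite /vnorm; apply: (big_ind (fun x => x <= d)) => [//|x y hx hy|i _]; [by rewrite ge_max hx hy|exact: h].
Qed.

Lemma vnorm0 : vnorm (fun _ : 'I_n => (0 : C)) = 0.
Proof.
apply/le_anti; rewrite vnorm_ge0 andbT; apply: vnorm_le => // i.
by rewrite cabs0.
Qed.

Lemma lin_bound (a h : V) :
  cabs (\sum_i a i * h i) <= (\sum_i cabs (a i)) * vnorm h.
Proof.
apply: (le_trans (cabs_sum _ _ _ _)); rewrite mulr_suml; apply: ler_sum => i _.
by rewrite cabsM ler_wpM2l ?cabs_ge0 ?vnorm_ge.
Qed.

Lemma sumabs_ge0 (a : V) : 0 <= \sum_i cabs (a i).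
Proof. by apply: sumr_ge0 => i _; apply: cabs_ge0. Qed.

Definition Dif (F : V -> V -> C) (I phi : V) :=
  exists a b : V,
      forall eps : R, 0 < eps -> exists2 delta : R, 0 < delta &
        forall h g : V, vnorm h < delta -> vnorm g < delta ->
          cabs (F (fun i => I i + h i) (fun i => phi i + g i) - F I phi
                 - \sum_(i < n) a i * h i - \sum_(i < n) b i * g i)
            <= eps * Num.max (vnorm h) (vnorm g).

Lemma analyticP F U : (forall I phi, U I phi -> Dif F I phi) -> analytic_on F U.
Proof. by []. Qed.

Lemma maxl (x y : R) : x <= Num.max x y.
Proof. by rewrite le_max lexx. Qed.
Lemma maxr (x y : R) : y <= Num.max x y.
Proof. by rewrite le_max lexx orbT. Qed.
Lemma max_ge0 (h g : V) : 0 <= Num.max (vnorm h) (vnorm g).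
Proof. exact: le_trans (vnorm_ge0 h) (maxl _ _). Qed.

Lemma Dif_ext F G I phi : (forall I phi, F I phi = G I phi) -> Dif F I phi -> Dif G I phi.
Proof.
move=> e; have -> : G = F by apply/funext => x; apply/funext => y; rewrite e.
done.
Qed.

Lemma Dif_lip F I phi : Dif F I phi -> exists2 K, 0 <= K & exists2 d, 0 < d &
  forall h g : V, vnorm h < d -> vnorm g < d ->
   cabs (F (fun i => I i + h i) (fun i => phi i + g i) - F I phi)
     <= K * Num.max (vnorm h) (vnorm g).
Proof.
case=> a [b H]; have [d d0 Hd] := H 1 ltr01.
exists (1 + \sum_i cabs (a i) + \sum_i cabs (b i)).
  by rewrite !addr_ge0 ?sumabs_ge0.
exists d => // h g hh hg.
set X := F _ _ - _.
have -> : X = (X - \sum_i a i * h i - \sum_i b i * g i) + \sum_i a i * h i + \sum_i b i * g i.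
  by ring.
apply: (le_trans (cabsD _ _)); rewrite !mulrDl.
apply: lerD; first apply: (le_trans (cabsD _ _)); first apply: lerD.
- exact: Hd.
- apply: (le_trans (lin_bound _ _)); apply: ler_wpM2l; first exact: sumabs_ge0.
  exact: maxl.
- apply: (le_trans (lin_bound _ _)); apply: ler_wpM2l; first exact: sumabs_ge0.
  exact: maxr.
Qed.

Lemma Dif_cst (c : C) I phi : Dif (fun _ _ => c) I phi.
Proof.
exists (fun _ => 0), (fun _ => 0) => eps e0; exists 1 => // h g _ _.
have z : forall x : V, \sum_(i < n) (0 : C) * x i = 0.
  by move=> x; rewrite big1 // => i _; rewrite mul0r.
rewrite /= !z subrr !subr0 cabs0; apply: mulr_ge0; [exact: ltW | exact: max_ge0].
Qed.

Lemma sumDl (a1 a2 h : V) :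
  \sum_i (a1 i + a2 i) * h i = \sum_i a1 i * h i + \sum_i a2 i * h i.
Proof. by rewrite -big_split; apply: eq_bigr => i _; rewrite mulrDl. Qed.

Lemma sumDr (a h1 h2 : V) :
  \sum_i a i * (h1 i + h2 i) = \sum_i a i * h1 i + \sum_i a i * h2 i.
Proof. by rewrite -big_split; apply: eq_bigr => i _; rewrite mulrDr. Qed.

Lemma Dif_lin (a b : V) I phi :
  Dif (fun I phi => \sum_i a i * I i + \sum_i b i * phi i) I phi.
Proof.
exists a, b => eps e0; exists 1 => // h g _ _.
have -> : \sum_i a i * (I i + h i) + \sum_i b i * (phi i + g i) -
   (\sum_i a i * I i + \sum_i b i * phi i) - \sum_i a i * h i - \sum_i b i * g i = 0.
  rewrite (sumDr a I h) (sumDr b phi g); ring.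
rewrite cabs0; apply: mulr_ge0; [exact: ltW | exact: max_ge0].
Qed.

Lemma Dif_add F G I phi : Dif F I phi -> Dif G I phi -> Dif (fun I phi => F I phi + G I phi) I phi.
Proof.
case=> a1 [b1 H1] [a2 [b2 H2]].
exists (fun i => a1 i + a2 i), (fun i => b1 i + b2 i) => eps e0.
have e2 : 0 < eps / 2 by rewrite divr_gt0.
have [d1 d10 Hd1] := H1 _ e2; have [d2 d20 Hd2] := H2 _ e2.
exists (Num.min d1 d2); first by rewrite lt_min d10 d20.
move=> h g; rewrite !lt_min => /andP[h1 h2] /andP[g1 g2].
rewrite (sumDl a1 a2 h) (sumDl b1 b2 g).
set A := F _ _; set B := G _ _.
have -> : A + B - (F I phi + G I phi) - (\sum_i a1 i * h i + \sum_i a2 i * h i)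
   - (\sum_i b1 i * g i + \sum_i b2 i * g i) =
   (A - F I phi - \sum_i a1 i * h i - \sum_i b1 i * g i) +
   (B - G I phi - \sum_i a2 i * h i - \sum_i b2 i * g i) by ring.
apply: (le_trans (cabsD _ _)).
have -> : eps * Num.max (vnorm h) (vnorm g) =
  eps / 2 * Num.max (vnorm h) (vnorm g) + eps / 2 * Num.max (vnorm h) (vnorm g).
  by rewrite -mulrDl -splitr.
by apply: lerD; [apply: Hd1 | apply: Hd2].
Qed.

End VN.

Arguments Dif_lip {R n F I phi}.
Section DifCalc.
Context {R : realType} {n : nat}.
Local Notation C := R[i].
Local Notation V := ('I_n -> C).
Local Open Scope complex_scope.

Lemma max_lt (x y d : R) : x < d -> y < d -> Num.max x y < d.
Proof. by move=> hx hy; rewrite gt_max hx hy. Qed.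

Lemma sumMl (c : C) (a h : V) :
  \sum_i (c * a i) * h i = c * \sum_i a i * h i.
Proof. by rewrite mulr_sumr; apply: eq_bigr => i _; rewrite mulrA. Qed.

Lemma mul_arith (g f KF KG eps m X Y P Q : R) : 0 <= g -> 0 <= f -> 0 <= KF -> 0 <= KG ->
  0 < eps -> 0 <= m -> 0 <= X -> 0 <= Y -> 0 <= P -> 0 <= Q ->
  X <= eps / (2 * (g + f + 1)) * m -> Y <= eps / (2 * (g + f + 1)) * m ->
  P <= KF * m -> Q <= KG * m -> m <= eps / (2 * (KF * KG + 1)) ->
  g * X + f * Y + P * Q <= eps * m.
Proof.
move=> g0 f0 KF0 KG0 e0 m0 X0 Y0 P0 Q0 hX hY hP hQ hm.
set A := g + f + 1; have A0 : 0 < A by rewrite /A; lra.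
set t := eps / (2 * A).
have ht : t * (2 * A) = eps by rewrite /t mulfVK // mulf_neq0 // gt_eqF.
have t0 : 0 <= t by rewrite /t; apply/ltW/divr_gt0 => //; apply: mulr_gt0.
have h1 : g * X + f * Y <= A * (t * m).
  have : g * X <= g * (t * m) by apply: ler_wpM2l.
  have : f * Y <= f * (t * m) by apply: ler_wpM2l.
  have : 0 <= t * m by apply: mulr_ge0.
  rewrite /A; nra.
set B := KF * KG + 1; have B0 : 0 < B by rewrite /B; nra.
set s := eps / (2 * B).
have hs : s * (2 * B) = eps by rewrite /s mulfVK // mulf_neq0 // gt_eqF.
have h2 : P * Q <= (KF * m) * (KG * m) by apply: ler_pM.
have h3 : (KF * m) * (KG * m) <= B * m * m by rewrite /B; nra.
have h4 : B * m * m <= B * s * m by apply: ler_wpM2r => //; apply: ler_wpM2l => //; apply: ltW.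
nra.
Qed.

Lemma Dif_mul F G (I phi : V) : Dif F I phi -> Dif G I phi ->
  Dif (fun I phi => F I phi * G I phi) I phi.
Proof.
move=> DF DG.
have [KF KF0 [dF dF0 HF]] := Dif_lip DF.
have [KG KG0 [dG dG0 HG]] := Dif_lip DG.
case: DF => a1 [b1 H1]; case: DG => a2 [b2 H2].
exists (fun i => G I phi * a1 i + F I phi * a2 i), (fun i => G I phi * b1 i + F I phi * b2 i).
move=> eps e0.
set A := cabs (G I phi) + cabs (F I phi) + 1.
have A0 : 0 < A by rewrite /A ltr_pwDr // addr_ge0 // cabs_ge0.
have e1 : 0 < eps / (2 * A) by rewrite divr_gt0 // mulr_gt0.
have [d1 d10 Hd1] := H1 _ e1; have [d2 d20 Hd2] := H2 _ e1.
have B0 : 0 < KF * KG + 1 by rewrite ltr_pwDr // mulr_ge0.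
have e3 : 0 < eps / (2 * (KF * KG + 1)) by rewrite divr_gt0 // mulr_gt0.
exists (Num.min d1 (Num.min d2 (Num.min dF (Num.min dG (eps / (2 * (KF * KG + 1))))))).
  by rewrite !lt_min d10 d20 dF0 dG0 e3.
move=> h g; rewrite !lt_min => /and5P[h1 h2 h3 h4 h5] /and5P[g1 g2 g3 g4 g5].
rewrite (sumDl _ _ h) (sumDl _ _ g) !sumMl.
set F1 := F _ _; set G1 := G _ _; set F0 := F I phi; set G0 := G I phi.
set SA1 := \sum_i a1 i * h i; set SA2 := \sum_i a2 i * h i.
set SB1 := \sum_i b1 i * g i; set SB2 := \sum_i b2 i * g i.
have -> : F1 * G1 - F0 * G0 - (G0 * SA1 + F0 * SA2) - (G0 * SB1 + F0 * SB2) =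
  G0 * (F1 - F0 - SA1 - SB1) + F0 * (G1 - G0 - SA2 - SB2) + (F1 - F0) * (G1 - G0) by ring.
apply: (le_trans (cabsD _ _)); rewrite cabsM.
apply: (le_trans (lerD (cabsD _ _) (lexx _))); rewrite !cabsM.
apply: (@mul_arith _ _ KF KG); rewrite ?cabs_ge0 ?max_ge0 //.
- exact: Hd1.
- exact: Hd2.
- exact: HF.
- exact: HG.
- by apply: ltW; apply: max_lt.
Qed.

Definition CDif (u : C -> C) (z0 d : C) := forall eps : R, 0 < eps ->
  exists2 delta : R, 0 < delta & forall w, cabs w < delta ->
    cabs (u (z0 + w) - u z0 - d * w) <= eps * cabs w.

Lemma Dif_comp (u : C -> C) d F (I phi : V) : CDif u (F I phi) d -> Dif F I phi ->
  Dif (fun I phi => u (F I phi)) I phi.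
Proof.
move=> Du DF.
have [K K0 [dL dL0 HL]] := Dif_lip DF.
case: DF => a [b H].
exists (fun i => d * a i), (fun i => d * b i) => eps e0.
have K1 : 0 < K + 1 by rewrite ltr_pwDr.
have eu : 0 < eps / (2 * (K + 1)) by rewrite divr_gt0 // mulr_gt0.
have [du du0 Hu] := Du _ eu.
have D1 : 0 < cabs d + 1 by rewrite ltr_pwDr // cabs_ge0.
have eF : 0 < eps / (2 * (cabs d + 1)) by rewrite divr_gt0 // mulr_gt0.
have [d1 d10 Hd1] := H _ eF.
have dd : 0 < du / (K + 1) by rewrite divr_gt0.
exists (Num.min d1 (Num.min dL (du / (K + 1)))); first by rewrite !lt_min d10 dL0 dd.
move=> h g; rewrite !lt_min => /and3P[h1 h2 h3] /and3P[g1 g2 g3].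
rewrite !sumMl.
set F1 := F _ _; set F0 := F I phi.
set SA := \sum_i a i * h i; set SB := \sum_i b i * g i.
set m := Num.max (vnorm h) (vnorm g).
have m0 : 0 <= m by apply: max_ge0.
have hm : m < du / (K + 1) by apply: max_lt.
have hw : cabs (F1 - F0) <= K * m by apply: HL.
have hw2 : cabs (F1 - F0) < du.
  apply: (le_lt_trans hw); apply: (@le_lt_trans _ _ ((K + 1) * m)).
    by apply: ler_wpM2r => //; rewrite lerDl.
  by rewrite mulrC -ltr_pdivlMr.
have eF1 : F1 = F0 + (F1 - F0) by ring.
have -> : u F1 - u F0 - d * SA - d * SB =
   (u (F0 + (F1 - F0)) - u F0 - d * (F1 - F0)) + d * (F1 - F0 - SA - SB).
  by rewrite -eF1; ring.
apply: (le_trans (cabsD _ _)); rewrite cabsM.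
have X1 := Hu _ hw2.
have X2 : cabs (F1 - F0 - SA - SB) <= eps / (2 * (cabs d + 1)) * m by apply: Hd1.
set x := cabs (F1 - F0) in hw X1 *.
set y := cabs (F1 - F0 - SA - SB) in X2 *.
set z := cabs (u (F0 + (F1 - F0)) - u F0 - d * (F1 - F0)) in X1 *.
have cd0 := cabs_ge0 d.
have x0 : 0 <= x by apply: cabs_ge0.
have q1 : z <= eps / (2 * (K + 1)) * (K * m).
  by apply: (le_trans X1); apply: ler_wpM2l => //; apply: ltW.
have q2 : eps / (2 * (K + 1)) * (K * m) <= eps / 2 * m.
  have ht : eps / (2 * (K + 1)) * (2 * (K + 1)) = eps.
    by rewrite mulfVK // mulf_neq0 // gt_eqF.
  move: ht (ltW eu); set t := eps / (2 * (K + 1)) => ht t0.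
  rewrite -ht; have : 0 <= t * m by apply: mulr_ge0.
  nra.
have q3 : cabs d * y <= eps / 2 * m.
  apply: (le_trans (ler_wpM2l cd0 X2)).
  have ht : eps / (2 * (cabs d + 1)) * (2 * (cabs d + 1)) = eps.
    by rewrite mulfVK // mulf_neq0 // gt_eqF.
  move: ht (ltW eF); set t := eps / (2 * (cabs d + 1)) => ht t0.
  rewrite -ht; have : 0 <= t * m by apply: mulr_ge0.
  nra.
have -> : eps * m = eps / 2 * m + eps / 2 * m by rewrite -mulrDl -splitr.
by apply: lerD => //; apply: le_trans q1 q2.
Qed.

End DifCalc.

Section DifCalc2.
Context {R : realType} {n : nat}.
Local Notation C := R[i].
Local Notation V := ('I_n -> C).
Local Open Scope complex_scope.

Lemma Dif_sum (T : Type) (r : seq T) (P : pred T) (Fs : T -> V -> V -> C) (I phi : V) :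
  (forall x, P x -> Dif (Fs x) I phi) ->
  Dif (fun I phi => \sum_(x <- r | P x) Fs x I phi) I phi.
Proof.
elim: r => [|x r IH] H.
  apply: (@Dif_ext _ _ (fun _ _ => 0)); first by move=> *; rewrite big_nil.
  exact: Dif_cst.
case hx: (P x).
  apply: (@Dif_ext _ _ (fun I phi => Fs x I phi + \sum_(y <- r | P y) Fs y I phi)).
    by move=> *; rewrite big_cons hx.
  by apply: Dif_add; [exact: H | exact: IH].
apply: (@Dif_ext _ _ (fun I phi => \sum_(y <- r | P y) Fs y I phi)).
  by move=> *; rewrite big_cons hx.
exact: IH.
Qed.

Lemma Dif_fI (f : V -> V -> C) (I th phi : V) : Dif f I th ->
  Dif (fun I' (_ : V) => f I' th) I phi.
Proof.
case=> a [b H]; exists a, (fun _ => 0) => eps e0.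
have [d d0 Hd] := H eps e0; exists d => // h g hh hg.
have hz : vnorm (fun _ : 'I_n => (0 : C)) < d by rewrite vnorm0.
have := Hd h (fun _ => 0) hh hz; rewrite vnorm0.
have -> : (fun i => th i + 0) = th by apply/funext => i; rewrite addr0.
move=> X.
have z1 : \sum_(i < n) b i * (fun _ => (0 : C)) i = 0.
  by rewrite big1 // => i _; rewrite mulr0.
have z2 : \sum_(i < n) (fun _ => (0 : C)) i * g i = 0.
  by rewrite big1 // => i _; rewrite mul0r.
rewrite z1 subr0 in X; rewrite z2 subr0.
apply: (le_trans X); apply: ler_wpM2l; first exact: ltW.
by rewrite ge_max maxl max_ge0.
Qed.

Lemma Dif_local F G (I phi : V) rho : 0 < rho ->
  (forall h g : V, vnorm h < rho -> vnorm g < rho ->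
     F (fun i => I i + h i) (fun i => phi i + g i) =
     G (fun i => I i + h i) (fun i => phi i + g i)) ->
  F I phi = G I phi -> Dif G I phi -> Dif F I phi.
Proof.
move=> r0 E E0 [a [b H]]; exists a, b => eps e0.
have [d d0 Hd] := H eps e0; exists (Num.min d rho); first by rewrite lt_min d0 r0.
move=> h g; rewrite !lt_min => /andP[h1 h2] /andP[g1 g2].
by rewrite E // E0; apply: Hd.
Qed.

Lemma CDif_inv (z0 : C) : z0 != 0 -> CDif (fun z => z^-1) z0 (- (z0 ^+ 2)^-1).
Proof.
move=> z00 eps e0.
set c := cabs z0.
have c0 : 0 < c.
  rewrite lt_def cabs_ge0 andbT; apply/eqP => /cabs_eq0 h; by rewrite h eqxx in z00.
have dd : 0 < eps * c ^+ 3 / 2 by rewrite divr_gt0 // mulr_gt0 // exprn_gt0.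
exists (Num.min (c / 2) (eps * c ^+ 3 / 2)); first by rewrite lt_min dd divr_gt0.
move=> w; rewrite lt_min => /andP[w1 w2].
have x0 := cabs_ge0 w.
have hy : c / 2 <= cabs (z0 + w).
  have : c <= cabs (z0 + w) + cabs w.
    by rewrite /c; have := cabsB (z0 + w) w; rewrite addrK.
  lra.
have zw : z0 + w != 0.
  apply/eqP => e; move: hy; rewrite e cabs0; lra.
have -> : (z0 + w)^-1 - z0^-1 - - (z0 ^+ 2)^-1 * w = w ^+ 2 / (z0 ^+ 2 * (z0 + w)).
  by field; rewrite zw z00.
rewrite cabsM cabsV cabsM !expr2 !cabsM -/c.
set x := cabs w in x0 w1 w2 *; set y := cabs (z0 + w) in hy *.
have y0 : 0 < y by apply: lt_le_trans hy; rewrite divr_gt0.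
rewrite ler_pdivrMr; last by rewrite !mulr_gt0.
have h1 : x * x <= x * (eps * c ^+ 3 / 2) by apply: ler_wpM2l => //; apply: ltW.
have h2 : eps * x * (c ^+ 3 / 2) <= eps * x * (c * c * y).
  apply: ler_wpM2l; first by rewrite mulr_ge0 // ltW.
  by rewrite exprSr expr2 -mulrA; apply: ler_wpM2l; rewrite ?mulr_ge0 // ltW.
apply: (le_trans h1); apply: le_trans h2; rewrite !mulrA; lra.
Qed.

Lemma CDif_cexp (z0 : C) : CDif (@cexp R) z0 (cexp z0).
Proof.
move=> eps e0.
set E := cabs (cexp z0).
have E0 : 0 <= E by apply: cabs_ge0.
have dd : 0 < eps / (10 * (E + 1)) by rewrite divr_gt0 // mulr_gt0 // ltr_pwDr.
exists (Num.min (1 / 2) (eps / (10 * (E + 1)))); first by rewrite lt_min dd; lra.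
move=> w; rewrite lt_min => /andP[w1 w2].
have -> : cexp (z0 + w) - cexp z0 - cexp z0 * w = cexp z0 * (cexp w - 1 - w).
  by rewrite cexpD; ring.
rewrite cabsM -/E.
have := cexp_quad w (ltW w1).
set x := cabs w in w1 w2 *; set q := cabs (cexp w - 1 - w) => hq.
have x0 : 0 <= x by apply: cabs_ge0.
have ht : eps / (10 * (E + 1)) * (10 * (E + 1)) = eps.
  by rewrite mulfVK // mulf_neq0 // gt_eqF // ltr_pwDr.
move: ht w2 (ltW dd); set t := eps / (10 * (E + 1)) => ht w2 t0.
rewrite -ht.
have : E * q <= E * (10 * x ^+ 2) by apply: ler_wpM2l.
have : x * x <= t * x by apply: ler_wpM2r => //; apply: ltW.
have : 0 <= E * x by apply: mulr_ge0.
nra.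
Qed.

End DifCalc2.

Section Roots.
Context {R : realType}.
Local Notation C := R[i].
Local Open Scope complex_scope.

Definition ee (x : R) : C := cexp ((0 : R) +i* x).

Lemma eeD x y : ee (x + y) = ee x * ee y.
Proof.
rewrite /ee -cexpD; congr cexp.
by apply/eqP; rewrite eq_complex /= addr0 !eqxx.
Qed.

Lemma eeMn x k : ee (x *+ k) = ee x ^+ k.
Proof.
rewrite /ee -cexpMn; congr cexp.
elim: k => [|k IH]; first by rewrite !mulr0n.
by rewrite !mulrS -IH; apply/eqP; rewrite eq_complex /= addr0 !eqxx.
Qed.

Lemma ee0 : ee 0 = 1.
Proof. exact: cexp0. Qed.

Lemma eeN x : ee (- x) = (ee x)^-1.
Proof.
rewrite /ee -cexpN; congr cexp.
by apply/eqP; rewrite eq_complex /= oppr0 !eqxx.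
Qed.

Lemma ee2pi : ee (pi *+ 2) = 1.
Proof.
rewrite /ee /cexp /= expR0 !mul1r cos2pi sin2pi.
by apply/eqP; rewrite eq_complex /= !eqxx.
Qed.

Lemma ee2pi_nat (k : nat) : ee (pi *+ 2 * k%:R) = 1.
Proof. by rewrite mulr_natr eeMn ee2pi expr1n. Qed.

Lemma ee2pi_int (d : int) : ee (pi *+ 2 * d%:~R) = 1.
Proof.
case: d => k; first exact: ee2pi_nat.
by rewrite NegzE mulrNz mulrN eeN (ee2pi_nat k.+1) invr1.
Qed.

Lemma cos_lt1 (x : R) : 0 < `|x| -> `|x| < pi *+ 2 -> cos x < 1.
Proof.
move=> h1 h2; rewrite -cos_norm.
set y := `|x| / 2.
have hy : `|x| = y *+ 2 by rewrite /y -mulr_natr divfK // pnatr_eq0.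
have hs : 0 < sin y.
  apply: sin_gt0_pi; apply/andP; split; first by rewrite /y divr_gt0.
  by rewrite /y ltr_pdivrMr // mulr_natr.
rewrite hy cos_mulr2n cos2sin2.
have : 0 < sin y ^+ 2 by rewrite exprn_gt0.
lra.
Qed.

Lemma ortho1 (d : int) (M : nat) : (0 < M)%N -> (`|d| < M)%N ->
  \sum_(t < M) ee (d%:~R * (pi *+ 2 * (t : nat)%:R / M%:R)) =
  if d == 0 then M%:R else 0.
Proof.
move=> M0 dM.
have M0' : (M%:R : R) != 0 by rewrite pnatr_eq0 -lt0n.
pose x : R := d%:~R * (pi *+ 2) / M%:R.
have et : forall t : 'I_M, ee (d%:~R * (pi *+ 2 * (t : nat)%:R / M%:R)) = ee x ^+ t.
  move=> t; rewrite -eeMn /x -mulr_natr; congr ee; field; exact: M0'.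
under eq_bigr do rewrite et.
have [d0|dn0] := eqVneq d 0.
  have -> : x = 0 by rewrite /x d0 !mul0r.
  rewrite ee0; under eq_bigr do rewrite expr1n.
  by rewrite sumr_const card_ord.
have wM : ee x ^+ M = 1.
  rewrite -eeMn /x -[_ *+ M]mulr_natr divfK // mulrC; exact: ee2pi_int.
have w1 : ee x != 1.
  apply/eqP => e.
  have : cos x = 1.
    by move: e; rewrite /ee /cexp /= expR0 !mul1r => -[].
  have p0 : 0 < pi *+ 2 :> R by rewrite pmulrn_lgt0 // pi_gt0.
  apply/eqP; rewrite lt_eqF // cos_lt1 //.
    rewrite normr_gt0 /x mulf_neq0 // ?invr_eq0 // mulf_neq0 //.
      by rewrite intr_eq0.
    by rewrite (gt_eqF p0).
  have ax : `|x| = (`|d|%N)%:R * (pi *+ 2) / M%:R.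
    by rewrite /x !normrM normfV (ger0_norm (ltW p0)) (ger0_norm (ler0n _ M)) -intr_norm natr_absz.
  rewrite ax ltr_pdivrMr ?ltr0n // mulrC ltr_pM2l // ltr_nat //.
have := subrX1 (ee x) M; rewrite wM subrr => /esym/eqP.
rewrite mulf_eq0 subr_eq0 (negbTE w1) /= => /eqP ->.
done.
Qed.

End Roots.

Section Coef.
Context {R : realType} {n : nat}.
Local Notation C := R[i].
Local Notation V := ('I_n -> C).
Local Open Scope complex_scope.

Definition grid (M : nat) (tau : 'I_n -> R) (j : {ffun 'I_n -> 'I_M}) : V :=
  fun i => ((pi *+ 2 * (j i : nat)%:R / M%:R) +i* tau i).
Arguments grid {M}.

Lemma term_split (d : int) (a b : R) :
  cexp ('i * ((d%:~R : C) * (a +i* b))) = (expR (- (d%:~R * b)))%:C * ee (d%:~R * a).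
Proof.
rewrite int_complex.
have -> : 'i * ((d%:~R : R)%:C * (a +i* b)) = (- (d%:~R * b)) +i* (d%:~R * a).
  by apply/eqP; rewrite eq_complex /= !mul0r !mul1r !subr0 !add0r !addr0 ?subr0 ?sub0r !eqxx.
rewrite /ee /cexp /= expR0 !mul1r.
by apply/eqP; rewrite eq_complex /= !mul0r !subr0 !addr0 !eqxx.
Qed.

Lemma idot_diff (nu mu : {ffun 'I_n -> int}) (phi : V) :
  'i * idot nu phi - 'i * idot mu phi = \sum_i 'i * ((nu i - mu i)%:~R * phi i).
Proof.
rewrite /idot -mulrBr -sumrB mulr_sumr; apply: eq_bigr => i _.
by rewrite intrB mulrBl.
Qed.

Lemma prod_grid (nu mu : {ffun 'I_n -> int}) (M : nat) (tau : 'I_n -> R) :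
  (0 < M)%N -> (forall i, `|nu i - mu i|%N < M)%N ->
  \sum_(j : {ffun 'I_n -> 'I_M}) cexp ('i * idot nu (grid tau j)) * cexp (- ('i * idot mu (grid tau j)))
   = if nu == mu then (M%:R : C) ^+ n else 0.
Proof.
move=> M0 hb.
under eq_bigr do rewrite -cexpD idot_diff cexp_sum.
under eq_bigr do under eq_bigr do rewrite /grid term_split.
rewrite -(bigA_distr_bigA (fun (i : 'I_n) (t : 'I_M) =>
   (expR (- ((nu i - mu i)%:~R * tau i)))%:C * ee ((nu i - mu i)%:~R * (pi *+ 2 * (t : nat)%:R / M%:R)))) /=.
under eq_bigr do rewrite -mulr_sumr ortho1 //.
have [->|neq] := eqVneq nu mu.
  under eq_bigr do rewrite subrr eqxx mul0r oppr0 expR0 mul1r.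
  by rewrite prodr_const card_ord.
have : ~~ [forall i, nu i == mu i].
  apply: contra neq => /forallP h; apply/eqP/ffunP => i; apply/eqP; exact: h.
rewrite negb_forall => /existsP [i hi].
by rewrite (bigD1 i) //= subr_eq0 (negbTE hi) mulr0 mul0r.
Qed.

Lemma abs_le_setnorm (N : seq {ffun 'I_n -> int}) nu i :
  nu \in N -> (`|nu i| <= setnorm N)%N.
Proof.
move=> hn.
have h1 : (inorm nu <= setnorm N)%N by rewrite /setnorm; apply: leq_bigmax_seq.
have h2 : (`|nu i| <= inorm nu)%N.
  rewrite /inorm; exact: (@leq_bigmax_cond _ predT (fun j => `|nu j|%N) i).
exact: leq_trans h2 h1.
Qed.

Lemma diff_lt (N : seq {ffun 'I_n -> int}) nu mu i :
  nu \in N -> mu \in N -> (`|nu i - mu i| < (setnorm N).*2.+1)%N.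
Proof.
move=> hn hm; rewrite ltnS -addnn.
apply: (leq_trans (leqD_dist _ 0 _)); rewrite subr0 sub0r abszN.
by apply: leq_add; apply: abs_le_setnorm.
Qed.

End Coef.
Arguments grid {R n M}.

Section Coef2.
Context {R : realType} {n : nat}.
Local Notation C := R[i].
Local Notation V := ('I_n -> C).
Local Open Scope complex_scope.

Lemma coef_formula (k : 'I_n) (L r sigma : R) (N : seq {ffun 'I_n -> int})
    (fmu : {ffun 'I_n -> int} -> V -> C) (f : V -> V -> C) (I : V) (tau : 'I_n -> R) mu :
  uniq N ->
  (forall I phi, domD k L r sigma I phi ->
     f I phi = \sum_(mu <- N) fmu mu I * cexp ('i%C * idot mu phi)) ->
  (forall i, cabs (I i - (if i == k then L%:C else 0)) < r * L) ->
  (forall i, `|tau i| < sigma) -> mu \in N ->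
  fmu mu I = (((setnorm N).*2.+1)%:R ^+ n)^-1 *
    \sum_(j : {ffun 'I_n -> 'I_((setnorm N).*2.+1)})
       f I (grid tau j) * cexp (- ('i * idot mu (grid tau j))).
Proof.
move=> uN hrep hI htau muN.
set M := (setnorm N).*2.+1.
have dom : forall j : {ffun 'I_n -> 'I_M}, domD k L r sigma I (grid tau j).
  by move=> j i; split; [exact: hI | exact: htau].
under eq_bigr do rewrite hrep // mulr_suml.
rewrite exchange_big /=.
under eq_bigr do under eq_bigr do rewrite -mulrA.
rewrite big_seq.
rewrite (eq_bigr (fun nu => fmu nu I * (if nu == mu then (M%:R : C) ^+ n else 0))); last first.
  move=> nu hnu; rewrite -mulr_sumr prod_grid //.
  by move=> i; apply: diff_lt.
rewrite -big_seq (big_rem mu muN) /= eqxx big_seq_cond big1; last first.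
  move=> nu /andP[hnu _].
  have -> : (nu == mu) = false.
    by apply/negbTE; apply: contraTN hnu => /eqP ->; rewrite mem_rem_uniqF.
  by rewrite mulr0.
by rewrite addr0 mulrC mulfK // expf_neq0 // pnatr_eq0.
Qed.

End Coef2.

Section Bounds.
Context {R : realType} {n : nat}.
Local Notation C := R[i].
Local Notation V := ('I_n -> C).
Local Open Scope complex_scope.

Lemma Im_sum (I : Type) (s : seq I) (P : pred I) (F : I -> C) :
  complex.Im (\sum_(i <- s | P i) F i) = \sum_(i <- s | P i) complex.Im (F i).
Proof. by apply: (big_morph (@complex.Im R)) => // -[a b] [c d]. Qed.

Lemma Re_sum (I : Type) (s : seq I) (P : pred I) (F : I -> C) :
  complex.Re (\sum_(i <- s | P i) F i) = \sum_(i <- s | P i) complex.Re (F i).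
Proof. by apply: (big_morph (@complex.Re R)) => // -[a b] [c d]. Qed.

Lemma Im_idot (mu : {ffun 'I_n -> int}) (phi : V) :
  complex.Im (idot mu phi) = \sum_i (mu i)%:~R * complex.Im (phi i).
Proof.
rewrite /idot Im_sum; apply: eq_bigr => i _; rewrite int_complex.
by case: (phi i) => a b /=; rewrite mul0r addr0.
Qed.

Lemma cabs_cexp_i (z : C) : cabs (cexp ('i * z)) = expR (- complex.Im z).
Proof. by rewrite cabs_cexp; case: z => a b /=; rewrite !mul0r mul1r sub0r. Qed.

Lemma cabs_cexp_mi (z : C) : cabs (cexp (- ('i * z))) = expR (complex.Im z).
Proof. by rewrite cabs_cexp; case: z => a b /=; rewrite !mul0r mul1r sub0r opprK. Qed.

Lemma int_abs_le (N : seq {ffun 'I_n -> int}) mu i : mu \in N ->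
  `|(mu i)%:~R : R| <= (setnorm N)%:R.
Proof. by move=> h; rewrite -intr_norm -natr_absz ler_nat abs_le_setnorm. Qed.

Lemma idot_lb (k : 'I_n) (L r : R) (N : seq {ffun 'I_n -> int}) mu (I : V) :
  0 < L -> 0 < r -> r * (2 * n%:R * (setnorm N)%:R) < 1 ->
  mu \in N -> mu k != 0 ->
  (forall i, cabs (I i - (if i == k then L%:C else 0)) < r * L) ->
  L / 2 < cabs (idot mu I).
Proof.
move=> L0 r0 hr muN muk hI.
set K := (setnorm N)%:R : R.
have K0 : 0 <= K by apply: ler0n.
have e : idot mu I = \sum_i (mu i)%:~R * (I i - (if i == k then L%:C else 0))
    + (mu k)%:~R * L%:C.
  rewrite /idot.
  have -> : (mu k)%:~R * L%:C = \sum_i (mu i)%:~R * (if i == k then L%:C else 0).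
    rewrite (bigD1 k) //= eqxx big1 ?addr0 // => i /negbTE ->; by rewrite mulr0.
  by rewrite -big_split /=; apply: eq_bigr => i _; rewrite -mulrDr subrK.
have b1 : cabs (\sum_i (mu i)%:~R * (I i - (if i == k then L%:C else 0)))
    <= n%:R * (K * (r * L)).
  apply: (le_trans (cabs_sum _ _ _ _)).
  have -> : n%:R * (K * (r * L)) = \sum_(i < n) (K * (r * L)).
    by rewrite sumr_const card_ord mulr_natl.
  apply: ler_sum => i _.
  rewrite cabsM cabs_int; apply: ler_pM; rewrite ?normr_ge0 ?cabs_ge0 //.
    exact: int_abs_le.
  exact: ltW.
have b2 : L <= cabs ((mu k)%:~R * L%:C).
  rewrite cabsM cabs_int cabs_real (gtr0_norm L0) -[X in X <= _]mul1r.
  apply: ler_wpM2r; first exact: ltW.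
  by apply: norm_intr_ge1; rewrite ?intr_int // intr_eq0.
have b3 : cabs ((mu k)%:~R * L%:C) <= cabs (idot mu I) +
    cabs (\sum_i (mu i)%:~R * (I i - (if i == k then L%:C else 0))).
  by rewrite e; have := cabsB (idot mu I) (\sum_i (mu i)%:~R * (I i - (if i == k then L%:C else 0)));
     rewrite e addrAC subrr add0r.
have : n%:R * (K * (r * L)) < L / 2.
  have -> : n%:R * (K * (r * L)) = (r * (2 * n%:R * K)) * L / 2.
    by rewrite mulrAC; field.
  by rewrite ltr_pM2r ?invr_gt0 // gtr_pMl.
lra.
Qed.

Lemma geom_bound (x : R) (K : nat) : 0 <= x < 1 ->
  \sum_(m < K) x ^+ m <= (1 - x)^-1.
Proof.
case/andP=> x0 x1.
have h := subrX1 x K.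
have hx : 0 < 1 - x by rewrite subr_gt0.
rewrite -(@ler_pM2l _ (1 - x)) // mulfV ?gt_eqF //.
have -> : (1 - x) * \sum_(m < K) x ^+ m = 1 - x ^+ K.
  by rewrite -opprB mulNr -h opprB.
by rewrite lerBlDr lerDl exprn_ge0.
Qed.

End Bounds.

Section Box.
Context {R : realType} {n : nat}.

Lemma sum_sub_le (T : finType) (s : seq T) (G : T -> R) : uniq s ->
  (forall c, 0 <= G c) -> \sum_(c <- s) G c <= \sum_c G c.
Proof.
move=> us G0; rewrite big_uniq // [X in _ <= X](bigID (mem s)) /= lerDl.
by apply: sumr_ge0 => c _.
Qed.

Lemma int_eq_sign_abs (a b : int) : ((a < 0) = (b < 0))%R -> `|a|%N = `|b|%N -> a = b.
Proof.
move=> hs ha; case: (ltrP a 0) hs => [a0 /esym b0|a0 /esym/negbT].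
  by apply: oppr_inj; rewrite -(ltz0_abs a0) -(ltz0_abs b0) ha.
rewrite -leNgt => b0.
by rewrite -(gez0_abs a0) -(gez0_abs b0) ha.
Qed.

Lemma box_bound (N : seq {ffun 'I_n -> int}) (x : R) : 0 <= x -> uniq N ->
  \sum_(mu <- N) \prod_i x ^+ `|mu i|%N <=
    (2 * \sum_(m < (setnorm N).+1) x ^+ m) ^+ n.
Proof.
move=> x0 uN.
set K := setnorm N.
pose code (mu : {ffun 'I_n -> int}) : {ffun 'I_n -> bool * 'I_K.+1} :=
  [ffun i => (((mu i) < 0)%R, inord `|mu i|%N)].
pose G (c : {ffun 'I_n -> bool * 'I_K.+1}) := \prod_i x ^+ (c i).2.
have eG : forall mu, mu \in N -> \prod_i x ^+ `|mu i|%N = G (code mu).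
  move=> mu hmu; rewrite /G; apply: eq_bigr => i _; rewrite ffunE /= inordK //.
  by rewrite ltnS abs_le_setnorm.
rewrite big_seq (eq_bigr _ eG) -big_seq -(big_map code xpredT G).
apply: (le_trans (sum_sub_le _ _ _ _ _)).
- rewrite map_inj_in_uniq // => mu1 mu2 h1 h2 /ffunP e.
  apply/ffunP => i; have := e i; rewrite !ffunE => -[es ea].
  apply: int_eq_sign_abs => //.
  have := congr1 (@nat_of_ord _) ea; rewrite !inordK // ltnS abs_le_setnorm //.
- by move=> c; rewrite /G; apply: prodr_ge0 => i _; apply: exprn_ge0.
rewrite /G -(bigA_distr_bigA (fun (i : 'I_n) (p : bool * 'I_K.+1) => x ^+ p.2)) /=.
rewrite prodr_const card_ord; apply: lerXn2r.
- by apply: sumr_ge0 => p _; apply: exprn_ge0.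
- by apply: mulr_ge0 => //; apply: sumr_ge0 => p _; apply: exprn_ge0.
rewrite -(pair_big xpredT xpredT (fun (b : bool) (m : 'I_K.+1) => x ^+ m)) /=.
by rewrite big_bool /= mulr2n mulrDl mul1r.
Qed.

End Box.

Section MainA.
Context {R : realType}.
Local Notation C := R[i].
Local Open Scope complex_scope.

Lemma main_analytic (n : nat) (k : 'I_n) (L sigma r : R)
    (N : seq {ffun 'I_n -> int})
    (fmu : {ffun 'I_n -> int} -> ('I_n -> R[i]) -> R[i])
    (f : ('I_n -> R[i]) -> ('I_n -> R[i]) -> R[i]) (sigma' : R) :
  0 < L -> 0 < sigma -> 0 < r -> uniq N ->
  (forall I phi, domD k L r sigma I phi ->
     f I phi = \sum_(mu <- N) fmu mu I * cexp ('i%C * idot mu phi)) ->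
  analytic_on f (domD k L r sigma) ->
  r * (2 * n%:R * (setnorm N)%:R) < 1 ->
  analytic_on (Qop k N fmu) (domD k L r sigma').
Proof.
move=> L0 s0 r0 uN hrep hf hr.
apply: analyticP => I0 phi0 hd.
set M := (setnorm N).*2.+1.
pose tau0 := fun _ : 'I_n => (0 : R).
have htau : forall i, `|tau0 i| < sigma by move=> i; rewrite normr0.
pose G := fun (I phi : 'I_n -> C) => - 'i * \sum_(mu <- N | (mu \in N) && (mu k != 0))
   ((((M%:R : C) ^+ n)^-1 * \sum_(j : {ffun 'I_n -> 'I_M})
       f I (grid tau0 j) * cexp (- ('i * idot mu (grid tau0 j)))) / idot mu I
     * cexp ('i * idot mu phi)).
have QG : forall I phi, (forall i, cabs (I i - (if i == k then L%:C else 0)) < r * L) ->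
    Qop k N fmu I phi = G I phi.
  move=> I phi hI; rewrite /Qop /G big_seq_cond; congr (_ * _).
  apply: eq_bigr => mu /andP[muN _].
  by rewrite (coef_formula k L r sigma N fmu f I tau0 mu uN hrep hI htau muN).
have hI0 : forall i, cabs (I0 i - (if i == k then L%:C else 0)) < r * L.
  by move=> i; case: (hd i).
have rL : 0 < r * L by apply: mulr_gt0.
set v := fun i => I0 i - (if i == k then L%:C else 0).
have hv : vnorm v < r * L by apply: vnorm_lt.
have rho0 : 0 < r * L - vnorm v by rewrite subr_gt0.
apply: (@Dif_local _ _ (Qop k N fmu) G I0 phi0 _ rho0 _ (QG _ _ hI0)).
  move=> h g hh hg; apply: QG => i.
  have -> : I0 i + h i - (if i == k then L%:C else 0) = v i + h i by rewrite /v; ring.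
  apply: (le_lt_trans (cabsD _ _)).
  have := vnorm_ge v i; have := vnorm_ge h i; lra.
rewrite /G; apply: Dif_mul; first exact: Dif_cst.
apply: Dif_sum => mu /andP[muN muk].
have inz : idot mu I0 != 0.
  apply/eqP => e; have := idot_lb _ _ _ _ _ _ L0 r0 hr muN muk hI0.
  rewrite e cabs0; have : 0 < L / 2 by rewrite divr_gt0.
  lra.
apply: Dif_mul; last first.
  apply: (Dif_comp _ _ _ _ _ (CDif_cexp _)).
  apply: (@Dif_ext _ _ (fun I phi => \sum_i (fun _ => (0 : C)) i * I i
      + \sum_i (fun i => 'i * (mu i)%:~R) i * phi i)); last exact: Dif_lin.
  move=> I phi /=; rewrite big1 ?add0r; last by move=> i _; rewrite mul0r.
  by rewrite /idot mulr_sumr; apply: eq_bigr => i _; rewrite mulrA.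
apply: Dif_mul.
  apply: Dif_mul; first exact: Dif_cst.
  apply: Dif_sum => j _; apply: Dif_mul; last exact: Dif_cst.
  apply: Dif_fI; apply: hf => i; split; first exact: hI0.
  by rewrite /grid /=.
have H := (@Dif_comp _ _ (fun z => z^-1) _ (fun I (_ : 'I_n -> C) => idot mu I) I0 phi0 (CDif_inv _ inz)).
apply: H.
apply: (@Dif_ext _ _ (fun I phi => \sum_i (fun i => (mu i)%:~R) i * I i
      + \sum_i (fun _ => (0 : C)) i * phi i)); last exact: Dif_lin.
move=> I phi /=; rewrite [X in _ + X]big1 ?addr0 //.
by move=> i _; rewrite mul0r.
Qed.

End MainA.

Section MainB.
Context {R : realType}.
Local Notation C := R[i].
Local Open Scope complex_scope.

Lemma final_num (del y : R) : 0 < del -> del < 1 -> y * (2 - del) = del -> 0 < y ->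
  2 * (1 - expR (- y))^-1 <= 4 / del.
Proof.
move=> d0 d1 ey y0.
have hx : expR (- y) <= (1 + y)^-1.
  rewrite expRN lef_pV2 ?posrE ?expR_gt0 ?expR_ge1Dx //; lra.
set X := 1 - expR (- y).
have Xy : y <= X * (1 + y).
  have : (1 + y)^-1 * (1 + y) = 1 by rewrite mulVf // gt_eqF //; lra.
  rewrite /X; nra.
have X0 : 0 < X.
  have : 0 < X * (1 + y) by lra.
  by rewrite pmulr_lgt0 //; lra.
rewrite ler_pdivlMr // mulrAC ler_pdivrMr //.
nra.
Qed.

Lemma real_bound (n : nat) (k : 'I_n) (L sigma r : R)
    (N : seq {ffun 'I_n -> int})
    (fmu : {ffun 'I_n -> int} -> ('I_n -> R[i]) -> R[i])
    (f : ('I_n -> R[i]) -> ('I_n -> R[i]) -> R[i]) (sigma' : R) (I phi : 'I_n -> C) (S : R) :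
  0 < L -> sigma <= 1 -> 0 < r -> uniq N ->
  (forall I phi, domD k L r sigma I phi ->
     f I phi = \sum_(mu <- N) fmu mu I * cexp ('i%C * idot mu phi)) ->
  r * (2 * n%:R * (setnorm N)%:R) < 1 -> 0 < sigma' -> sigma' < sigma ->
  (forall i, cabs (I i - (if i == k then L%:C else 0)) < r * L) ->
  (forall i, `|complex.Im (phi i)| < sigma') ->
  (forall I' phi', domD k L r sigma I' phi' -> cabs (f I' phi') <= S) -> 0 <= S ->
  cabs (Qop k N fmu I phi) <= 2 * (4 / (sigma - sigma')) ^+ n / L * S.
Proof.
move=> L0 s1 r0 uN hrep hr s'0 ss hI hphi hS S0.
set del := sigma - sigma'.
have d0 : 0 < del by rewrite /del subr_gt0.
have d1 : del < 1 by rewrite /del; lra.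
have h2 : 0 < 2 - del by lra.
set y := del / (2 - del).
have ey : y * (2 - del) = del by rewrite /y mulfVK // gt_eqF.
have y0 : 0 < y by rewrite /y divr_gt0.
have yd : y < del by nra.
set s := sigma' + y.
have s0 : 0 < s by rewrite /s; lra.
have ssig : s < sigma by rewrite /s; move: yd; rewrite /del; lra.
pose A (mu : {ffun 'I_n -> int}) := \sum_i `|(mu i)%:~R : R|.
have Bc : forall mu, mu \in N -> cabs (fmu mu I) <= S * expR (- (s * A mu)).
  move=> mu muN.
  pose tau := fun i => if (0 <= mu i)%R then - s else s.
  have ht : forall i, `|tau i| < sigma.
    by move=> i; rewrite /tau; case: ifP; rewrite ?normrN gtr0_norm.
  have eI : forall j : {ffun 'I_n -> 'I_((setnorm N).*2.+1)},
      \sum_i (mu i)%:~R * complex.Im (grid tau j i) = - (s * A mu).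
    move=> j; rewrite /A mulr_sumr -sumrN; apply: eq_bigr => i _ /=.
    rewrite /tau; case: ifP => hm.
      by rewrite ger0_norm ?ler0z // mulrN mulrC.
    rewrite ltr0_norm; first by rewrite mulrN opprK mulrC.
    by rewrite ltrz0 ltNge hm.
  rewrite (coef_formula k L r sigma N fmu f I tau mu uN hrep hI ht muN).
  set M := (setnorm N).*2.+1.
  rewrite cabsM.
  have eM : cabs (((M%:R : C) ^+ n)^-1) = ((M%:R : R) ^+ n)^-1.
    by rewrite cabsV -(rmorph_nat (real_complex R)) -rmorphXn cabs_real ger0_norm.
  rewrite eM.
  have hsum : cabs (\sum_(j : {ffun 'I_n -> 'I_M}) f I (grid tau j) *
        cexp (- ('i * idot mu (grid tau j)))) <=
      \sum_(j : {ffun 'I_n -> 'I_M}) S * expR (- (s * A mu)).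
    apply: (le_trans (cabs_sum _ _ _ _)); apply: ler_sum => j _.
    rewrite cabsM cabs_cexp_mi Im_idot eI; apply: ler_wpM2r; first exact: expR_ge0.
    by apply: hS => i; split; [exact: hI | exact: ht].
  have Mn0 : 0 < (M%:R : R) ^+ n by rewrite exprn_gt0 // ltr0n.
  apply: (le_trans (ler_wpM2l _ hsum)); first by rewrite invr_ge0 ltW.
  rewrite sumr_const card_ffun !card_ord -[_ *+ (M ^ n)]mulr_natl natrX mulrA.
  by rewrite -!mulrA mulKf ?gt_eqF.
have term : forall mu, mu \in N -> mu k != 0 ->
    cabs (fmu mu I / idot mu I * cexp ('i * idot mu phi)) <=
    2 * S / L * \prod_i expR (- y) ^+ `|mu i|%N.
  move=> mu muN muk.
  have lb := idot_lb _ _ _ _ _ _ L0 r0 hr muN muk hI.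
  have L2 : 0 < L / 2 by rewrite divr_gt0.
  have iv : (cabs (idot mu I))^-1 <= 2 / L.
    rewrite -invf_div lef_pV2 ?posrE //; first exact: ltW.
    exact: lt_trans lb.
  have ce : cabs (cexp ('i * idot mu phi)) <= expR (sigma' * A mu).
    rewrite cabs_cexp_i Im_idot ler_expR /A mulr_sumr -sumrN; apply: ler_sum => i _.
    rewrite -mulrN; apply: (le_trans (ler_norm _)); rewrite normrM mulrC.
    apply: ler_wpM2r; first exact: normr_ge0.
    by rewrite normrN; apply: ltW.
  rewrite !cabsM cabsV.
  have e1 : expR (- (s * A mu)) * expR (sigma' * A mu) = \prod_i expR (- y) ^+ `|mu i|%N.
    rewrite -expRD.
    have -> : - (s * A mu) + sigma' * A mu = \sum_i (`|mu i|%N%:R * (- y)).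
      rewrite /A /s mulr_sumr mulr_sumr -sumrN -big_split /=; apply: eq_bigr => i _.
      rewrite -intr_norm -natr_absz; ring.
    by rewrite expR_sum; apply: eq_bigr => i _; rewrite expRM_natl.
  rewrite -e1.
  have aB := Bc mu muN.
  have a0 := cabs_ge0 (fmu mu I).
  have c0 := cabs_ge0 (cexp ('i * idot mu phi)).
  have b0 : 0 <= (cabs (idot mu I))^-1 by rewrite invr_ge0 cabs_ge0.
  have hh1 := ler_pM a0 b0 aB iv.
  have hh2 := ler_pM (mulr_ge0 a0 b0) c0 hh1 ce.
  apply: (le_trans hh2); rewrite le_eqVlt; apply/orP; left; apply/eqP; ring.
rewrite /Qop cabsM cabsN cabs_i mul1r.
apply: (le_trans (cabs_sum _ _ _ _)).
rewrite big_seq_cond.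
set x := expR (- y).
have x0 : 0 <= x by apply: expR_ge0.
have x1 : x < 1 by rewrite /x expR_lt1 oppr_lt0.
have SL : 0 <= 2 * S / L by rewrite divr_ge0 ?mulr_ge0 // ltW.
apply: (@le_trans _ _ (\sum_(mu <- N | (mu \in N) && (mu k != 0))
     2 * S / L * \prod_i x ^+ `|mu i|%N)).
  by apply: ler_sum => mu /andP[muN muk]; apply: term.
have P0 : forall mu : {ffun 'I_n -> int}, 0 <= 2 * S / L * \prod_i x ^+ `|mu i|%N.
  by move=> mu; apply: mulr_ge0 => //; apply: prodr_ge0 => i _; apply: exprn_ge0.
apply: (@le_trans _ _ (\sum_(mu <- N) 2 * S / L * \prod_i x ^+ `|mu i|%N)).
  rewrite [X in _ <= X](bigID (fun mu => (mu \in N) && (mu k != 0))) /= lerDl.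
  by apply: sumr_ge0 => mu _.
rewrite -mulr_sumr.
apply: (le_trans (ler_wpM2l SL (box_bound N x x0 uN))).
have g1 : 2 * \sum_(m < (setnorm N).+1) x ^+ m <= 4 / del.
  apply: (le_trans _ (final_num del y d0 d1 ey y0)); rewrite ler_pM2l //.
  by apply: geom_bound; rewrite x0 x1.
have g0 : 0 <= 2 * \sum_(m < (setnorm N).+1) x ^+ m.
  by apply: mulr_ge0 => //; apply: sumr_ge0 => m _; apply: exprn_ge0.
have g2 : (2 * \sum_(m < (setnorm N).+1) x ^+ m) ^+ n <= (4 / del) ^+ n.
  by apply: lerXn2r; rewrite ?nnegrE //; apply: le_trans g0 g1.
apply: (le_trans (ler_wpM2l SL g2)).
rewrite le_eqVlt; apply/orP; left; apply/eqP; ring.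
Qed.

End MainB.

Local Open Scope ring_scope.

Theorem propositionA3 (R : realType) (n : nat) (k : 'I_n) (L sigma r : R)
    (N : seq {ffun 'I_n -> int})
    (fmu : {ffun 'I_n -> int} -> ('I_n -> R[i]) -> R[i])
    (f : ('I_n -> R[i]) -> ('I_n -> R[i]) -> R[i]) :
  (2 <= n)%N ->
  0 < L -> 0 < sigma -> sigma <= 1 -> 0 < r ->
  uniq N ->
  (forall I phi, domD k L r sigma I phi ->
     f I phi = \sum_(mu <- N) fmu mu I * cexp ('i%C * idot mu phi)) ->
  analytic_on f (domD k L r sigma) ->
  r * (2 * n%:R * (setnorm N)%:R) < 1 ->
  forall sigma' : R, 0 < sigma' -> sigma' < sigma ->
    analytic_on (Qop k N fmu) (domD k L r sigma') /\
    (supnorm k L r sigma' (Qop k N fmu)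
      <= (2 * (4 / (sigma - sigma')) ^+ n / L)%:E * supnorm k L r sigma f)%E.
Proof.
move=> n2 L0 s0 s1 r0 uN hrep hf hr sigma' s'0 ss.
split; first exact: (@main_analytic R n k L sigma r N fmu f sigma' L0 s0 r0 uN hrep hf hr).
apply: ge_ereal_sup => _ [I [phi [hd ->]]].
have hI : forall i, cabs (I i - (if i == k then L%:C else 0)%C) < r * L.
  by move=> i; case: (hd i).
have hphi : forall i, `|complex.Im (phi i)| < sigma' by move=> i; case: (hd i).
have Tge : forall I' phi', domD k L r sigma I' phi' ->
    ((cabs (f I' phi'))%:E <= supnorm k L r sigma f)%E.
  by move=> I' phi' h; apply: ereal_sup_ubound; exists I', phi'.
have d0 : domD k L r sigma I (fun _ => 0).
  by move=> i; split; [exact: hI | rewrite /= normr0].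
have c0 : 0 < 2 * (4 / (sigma - sigma')) ^+ n / L.
  by rewrite divr_gt0 // mulr_gt0 // exprn_gt0 // divr_gt0 // subr_gt0.
move: Tge; case: (supnorm k L r sigma f) => [S| |] Tge.
- have hS : forall I' phi', domD k L r sigma I' phi' -> cabs (f I' phi') <= S.
    by move=> I' phi' h; have := Tge _ _ h; rewrite lee_fin.
  have S0 : 0 <= S by apply: le_trans (cabs_ge0 _) (hS _ _ d0).
  rewrite -EFinM lee_fin.
  exact: (@real_bound R n k L sigma r N fmu f sigma' I phi S L0 s1 r0 uN hrep hr s'0 ss hI hphi hS S0).
- by rewrite gt0_muley ?lte_fin // leey.
- by have := Tge _ _ d0; rewrite leeNy_eq.
Qed.
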